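(* Fix $\alpha\in[0,1]$ and let $f:[0,1]\to[0,1]$ satisfy $\left(1-\int_0^x\frac{dx'}{f(x')}\right)f(x)\le\alpha$ for all $x\in[0,1]$. Then $\int_0^{\alpha\log(1/\alpha)}\frac{dx}{f(x)}\ge 1-\alpha$.
   Context: $\log$ denotes the natural logarithm. *)

(* Defs.v *)
From HB Require Import structures.
From mathcomp Require Import all_boot all_order all_algebra.
From mathcomp Require Import all_classical all_reals all_analysis.
Set Implicit Arguments. Unset Strict Implicit. Unset Printing Implicit Defensive.
Import Order.TTheory GRing.Theory Num.Theory.
Local Open Scope ring_scope.
Local Open Scope classical_set_scope.
Local Open Scope ereal_scope.

(* F f x = \int_0^x dx'/f(x') as an extended real (1/0 := +oo, via inve). *)
Definition recip_int (R : realType) (f : R -> R) (x : R) : \bar R :=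
  \int[lebesgue_measure]_(t in `[0%R, x]) ((f t)%:E)^-1.

(* Main.v *)
Require Import Defs.
From HB Require Import structures.
From mathcomp Require Import all_boot all_order all_algebra.
From mathcomp Require Import all_classical all_reals all_analysis measurable_realfun.
Import Order.TTheory GRing.Theory Num.Theory.
From mathcomp Require Import lra ring.
Local Open Scope ring_scope.
Local Open Scope classical_set_scope.
Local Open Scope ereal_scope.
Lemma meas_inv (R : realType) (f : R -> R)
  (hfm : measurable_fun (`[0%R, 1%R] : set R) f)
  (hf01 : forall x : R, (0 <= x <= 1)%R -> (0 <= f x <= 1)%R) :
  measurable_fun (`[0%R, 1%R] : set R) (fun t : R => ((f t)%:E)^-1 : \bar R).
Proof.
pose h := fun x : R => if x == 0%R then +oo else (expR (- ln x))%:E.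
have mh : measurable_fun setT h.
  apply: measurable_fun_ifT.
  - apply: measurable_fun_eqr; [exact: measurable_id| exact: measurable_cst].
  - exact: measurable_cst.
  - apply/measurable_EFinP; apply: measurableT_comp.
      by apply: continuous_measurable_fun; exact: continuous_expR.
    apply: measurable_funN; exact: measurable_ln.
apply: (eq_measurable_fun (h \o f)); last exact: measurableT_comp mh hfm.
move=> t; rewrite inE /= in_itv /= => /hf01 /andP[f0 _].
rewrite /h; case: eqP => [->|fn0]; first by rewrite inve0.
rewrite inver ifF; last exact/eqP.
rewrite /= expRN lnK //.
by rewrite posrE lt_neqAle eq_sym; apply/andP; split=> //; apply/eqP.
Qed.
Section Int.
Variables (R : realType) (g : R -> \bar R).
Hypothesis mg : measurable_fun (`[0%R, 1%R] : set R) g.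
Hypothesis g0 : forall t : R, (0 <= t <= 1)%R -> 0 <= g t.
Let mu := (@lebesgue_measure R).

Lemma int_split (x y : R) : (0 <= x)%R -> (x <= y)%R -> (y <= 1)%R ->
  \int[mu]_(t in `[0%R, y]) g t =
  \int[mu]_(t in `[0%R, x]) g t + \int[mu]_(t in `]x, y]) g t.
Proof.
move=> x0 xy y1.
rewrite (@itv_bndbnd_setU _ _ (BLeft 0%R) (BRight x) (BRight y)); last 2 first.
- by rewrite bnd_simp.
- by rewrite bnd_simp.
rewrite ge0_integral_setU //.
- rewrite -itv_bndbnd_setU; last 2 first.
  + by rewrite bnd_simp.
  + by rewrite bnd_simp.
  apply: measurable_funS mg => //.
  by move=> t /=; rewrite !in_itv /= => /andP[? ?]; apply/andP; split => //; lra.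
- move=> t [] /=; rewrite in_itv /= => /andP[? ?]; apply: g0; apply/andP; split; lra.
- apply/disj_setPS => t [] /=; rewrite !in_itv /= => /andP[? ?] /andP[? ?]; lra.
Qed.

Lemma int_mono (x y : R) : (0 <= x)%R -> (x <= y)%R -> (y <= 1)%R ->
  \int[mu]_(t in `[0%R, x]) g t <= \int[mu]_(t in `[0%R, y]) g t.
Proof.
move=> x0 xy y1; rewrite (@int_split x y x0 xy y1) leeDl //.
apply: integral_ge0 => t /=; rewrite in_itv /= => /andP[? ?]; apply: g0.
apply/andP; split; lra.
Qed.

Lemma int_lb (x y c : R) : (0 <= x)%R -> (x <= y)%R -> (y <= 1)%R ->
  (forall t, (x < t <= y)%R -> c%:E <= g t) ->
  (c * (y - x))%:E <= \int[mu]_(t in `]x, y]) g t.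
Proof.
move=> x0 xy y1 hc.
have [c0|c0] := lerP c 0%R.
  apply: (@le_trans _ _ 0).
    by rewrite lee_fin; apply: mulr_le0_ge0 => //; lra.
  apply: integral_ge0 => t /=; rewrite in_itv /= => /andP[? ?]; apply: g0.
  apply/andP; split; lra.
apply: (@le_trans _ _ (\int[mu]_(t in `]x, y]) (cst c%:E) t)).
  rewrite integral_cst //= lebesgue_measure_itv /=.
  have [xy'|xy'] := ltrP x y.
    by rewrite lte_fin xy' -EFinD -EFinM.
  have -> : y = x by apply/eqP; rewrite eq_le xy xy'.
  by rewrite ltxx subrr mulr0 mule0.
apply: ge0_le_integral => //.
- by move=> t _ /=; rewrite lee_fin ltW.
- apply: measurable_funS mg => //.
  by move=> t /=; rewrite !in_itv /= => /andP[? ?]; apply/andP; split => //; lra.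
Qed.
End Int.
Section RealLemmas.
Local Open Scope ring_scope.
Lemma bernoulli_le (R : realType) (z : R) (n : nat) : 0 <= z <= 1 ->
  1 - n%:R * z <= (1 - z) ^+ n.
Proof.
move=> /andP[z0 z1]; elim: n => [|n IH]; first by rewrite expr0 mul0r subr0.
rewrite exprS -natr1.
have h1 : 0 <= 1 - z by lra.
apply: (@le_trans _ _ ((1 - z) * (1 - n%:R * z))); last exact: ler_wpM2l.
have hn : 0 <= n%:R * (z * z) :> R by apply: mulr_ge0 => //; nra.
lra.
Qed.

Lemma final_bound (R : realType) (v L : R) : 0 <= L ->
  (forall n : nat, (0 < n)%N -> v * (1 + L / n%:R) ^+ n <= 1) ->
  v <= expR (- L).
Proof.
move=> L0 hv; rewrite leNgt; apply/negP => hlt.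
have E0 : 0 < expR L by exact: expR_gt0.
have v0 : 0 < v by apply: lt_trans hlt; exact: expR_gt0.
pose w := v * expR L.
have w1 : 1 < w.
  by rewrite /w -(ltr_pdivrMr _ _ E0) div1r -expRN.
pose M := L + w * L ^+ 2 / (w - 1) + 1.
have hQ : 0 <= w * L ^+ 2 / (w - 1).
  by apply: divr_ge0; [apply: mulr_ge0; [lra|exact: sqr_ge0] | lra].
have M0 : 0 <= M by rewrite /M; lra.
have := archi_boundP M0; set n := Num.Def.archi_bound M => hn.
have n0 : (0 < n)%N.
  by rewrite -(ltr_nat R); exact: le_lt_trans M0 hn.
have nR0 : 0 < n%:R :> R by rewrite ltr0n.
pose y := L / n%:R.
have y0 : 0 <= y by apply: divr_ge0 => //; exact: ltW.
have y1 : y <= 1.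
  by rewrite /y ler_pdivrMr // mul1r; rewrite /M in hn; lra.
have ha : expR y * (1 - y ^+ 2) <= 1 + y.
  have := expR_ge1Dx (- y); rewrite expRN => h.
  have ey : 0 < expR y by exact: expR_gt0.
  have : (1 - y) * expR y <= 1.
    by rewrite -ler_pdivlMr // div1r; lra.
  nra.
have hb : expR L * (1 - y ^+ 2) ^+ n <= (1 + y) ^+ n.
  have -> : expR L = expR y ^+ n.
    by rewrite -expRM_natr /y -mulrA mulVf ?mulr1 // gt_eqF.
  rewrite -exprMn; apply: lerXn2r => //.
  - rewrite nnegrE; apply: mulr_ge0; first exact: expR_ge0.
    have : y ^+ 2 <= 1 by rewrite expr2; nra.
    lra.
  - by rewrite nnegrE; lra.
have hc := @bernoulli_le R (y ^+ 2) n.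
have y21 : 0 <= y ^+ 2 <= 1 by apply/andP; split; [exact: sqr_ge0| rewrite expr2; nra].
have {}hc := hc y21.
have hny : n%:R * y ^+ 2 = L ^+ 2 / n%:R.
  rewrite /y expr_div_n expr2 mulrA; field; exact: lt0r_neq0.
have := hv n n0; rewrite -/y => hv'.
have h1 : w * (1 - L ^+ 2 / n%:R) <= 1.
  rewrite -hny /w -mulrA; apply: le_trans hv'; apply: ler_wpM2l; first exact: ltW.
  apply: le_trans hb; apply: ler_wpM2l; first exact: ltW.
  exact: hc.
have h2 : n%:R * (w - 1) <= w * L ^+ 2.
  have : w * (1 - L ^+ 2 / n%:R) * n%:R <= n%:R.
    by rewrite -[X in _ <= X]mul1r; apply: ler_wpM2r => //; exact: ltW.
  have -> : w * (1 - L ^+ 2 / n%:R) * n%:R = w * n%:R - w * L ^+ 2.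
    by field; exact: lt0r_neq0.
  lra.
have h3 : w * L ^+ 2 / (w - 1) < n%:R.
  by apply: le_lt_trans hn; rewrite /M; have := sqr_ge0 L; lra.
move: h3; rewrite ltr_pdivrMr; last lra.
lra.
Qed.
End RealLemmas.

Theorem lemma7 (R : realType) (alpha : R) (f : R -> R)
  (halpha0 : (0 < alpha)%R) (halpha1 : (alpha <= 1)%R)
  (hfm : measurable_fun (`[0%R, 1%R] : set R) f)
  (hf01 : forall x : R, (0 <= x <= 1)%R -> (0 <= f x <= 1)%R)
  (hcond : forall x : R, (0 <= x <= 1)%R ->
     (1 - recip_int f x) * (f x)%:E <= alpha%:E) :
  recip_int f (alpha * ln (alpha^-1))%R >= (1 - alpha)%:E.
Proof.
pose g := fun t : R => ((f t)%:E)^-1 : \bar R.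
have mg : measurable_fun (`[0%R, 1%R] : set R) g := @meas_inv R f hfm hf01.
have g0 : forall t : R, (0 <= t <= 1)%R -> 0 <= g t.
  by move=> t /hf01 /andP[? _]; rewrite /g inve_ge0 lee_fin.
pose L := ln (alpha^-1).
have L0 : (0 <= L)%R by apply: ln_ge0; rewrite invf_ge1.
pose a := (alpha * L)%R.
have a0 : (0 <= a)%R by apply: mulr_ge0 => //; exact: ltW.
have a1 : (a <= 1)%R.
  have := @ln_sublinear R (alpha^-1); rewrite invr_gt0 => /(_ halpha0) h.
  apply: ltW; rewrite /a -(mulfV (lt0r_neq0 halpha0)).
  by rewrite ltr_pM2l.
rewrite -/L -/a.
have hF : forall x, recip_int f x = \int[lebesgue_measure]_(t in `[0%R, x]) g t by [].
have [Fay|Fafin] := eqVneq (recip_int f a) +oo; first by rewrite Fay leey.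
have F0 : forall x, (0 <= x)%R -> (x <= 1)%R -> 0 <= recip_int f x.
  move=> x x0 x1; rewrite hF; apply: integral_ge0 => t /=; rewrite in_itv /=.
  by move=> /andP[? ?]; apply: g0; apply/andP; split => //; lra.
have Fmono : forall x y, (0 <= x)%R -> (x <= y)%R -> (y <= 1)%R ->
    recip_int f x <= recip_int f y.
  by move=> x y x0 xy y1; rewrite !hF; exact: (@int_mono R g mg g0 x y x0 xy y1).
have Ffin : forall x, (0 <= x)%R -> (x <= a)%R -> recip_int f x = (fine (recip_int f x))%:E.
  move=> x x0 xa; rewrite fineK // ge0_fin_numE; last by apply: F0; lra.
  apply: (@le_lt_trans _ _ (recip_int f a)); first by apply: Fmono => //; lra.
  by rewrite ltey.
pose Fr := fun x : R => fine (recip_int f x).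
have Frmono : forall x y, (0 <= x)%R -> (x <= y)%R -> (y <= a)%R -> (Fr x <= Fr y)%R.
  move=> x y x0 xy ya.
  have xa : (x <= a)%R by lra.
  have y0 : (0 <= y)%R by lra.
  rewrite -lee_fin /Fr -(Ffin x x0 xa) -(Ffin y y0 ya).
  by apply: Fmono => //; lra.
have key : forall x y, (0 <= x)%R -> (x <= y)%R -> (y <= a)%R ->
    (Fr x + (1 - Fr y) / alpha * (y - x) <= Fr y)%R.
  move=> x y x0 xy ya.
  have y1 : (y <= 1)%R by lra.
  have := @int_split R g mg g0 x y x0 xy y1; rewrite -!hF.
  have xa : (x <= a)%R by lra.
  have y0 : (0 <= y)%R by lra.
  rewrite (Ffin y y0 ya) (Ffin x x0 xa) => E.
  rewrite -lee_fin /Fr E EFinD leeD2l //.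
  apply: (@int_lb R g mg g0 x y _ x0 xy y1) => t /andP[xt ty].
  have t0 : (0 <= t <= 1)%R by apply/andP; split; lra.
  have t0' : (0 <= t)%R by lra.
  have ta : (t <= a)%R by lra.
  have := hcond t t0; rewrite (Ffin t t0' ta).
  rewrite -EFinB -EFinM lee_fin => ht.
  have hty : (Fr t <= Fr y)%R by apply: Frmono => //; lra.
  have /andP[ft0 _] := hf01 t t0.
  rewrite /g; have [->|ftn0] := eqVneq (f t) 0%R; first by rewrite inve0 leey.
  have ftp : (0 < f t)%R by rewrite lt_neqAle eq_sym ftn0.
  rewrite inver (negPf ftn0) lee_fin ler_pdivrMr // mulrC ler_pdivlMr //.
  rewrite /Fr in hty.
  have hp : (0 <= (fine (recip_int f y) - fine (recip_int f t)) * f t)%R.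
    by apply: mulr_ge0 => //; rewrite subr_ge0.
  move: hp ht; rewrite mulrBl mulrBl mulrBl; lra.
have expa : expR (- L) = alpha.
  by rewrite /L lnV ?posrE // opprK lnK // posrE.
have rec : forall n : nat, (0 < n)%N -> forall k, (k <= n)%N ->
    ((1 - Fr (a * k%:R / n%:R)) * (1 + L / n%:R) ^+ k <= 1)%R.
  move=> n n0; have nR0 : (0 < n%:R :> R)%R by rewrite ltr0n.
  have nR0' : (n%:R != 0 :> R)%R by rewrite gt_eqF.
  elim => [|k IH] hk.
    rewrite mulr0 mul0r expr0 mulr1.
    have : (0 <= Fr 0%R)%R by apply: fine_ge0; apply: F0 => //; lra.
    lra.
  have IH' := IH (ltnW hk).
  pose x := (a * k%:R / n%:R)%R; pose y := (a * k.+1%:R / n%:R)%R.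
  have x0 : (0 <= x)%R by apply: divr_ge0; [apply: mulr_ge0 => //| exact: ltW].
  have dxy : (y - x = a / n%:R)%R by rewrite /x /y -natr1; field.
  have an0 : (0 <= a / n%:R)%R by apply: divr_ge0 => //; exact: ltW.
  have xy : (x <= y)%R by lra.
  have ya : (y <= a)%R.
    rewrite /y ler_pdivrMr // ler_wpM2l // ler_nat //.
  have := key x y x0 xy ya.
  have -> : ((1 - Fr y) / alpha * (y - x) = (1 - Fr y) * (L / n%:R))%R.
    by rewrite dxy /a; field; apply/andP; split => //; rewrite gt_eqF.
  rewrite -/x -/y in IH' *.
  move=> hkey.
  have qn : (0 <= L / n%:R)%R by apply: divr_ge0 => //; exact: ltW.
  have P0 : (0 <= (1 + L / n%:R) ^+ k)%R by apply: exprn_ge0; lra.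
  have h1 : ((1 - Fr y) * (1 + L / n%:R) <= 1 - Fr x)%R by lra.
  have h2 := ler_wpM2r P0 h1.
  rewrite exprS mulrA; lra.
have fb : (1 - Fr a <= expR (- L))%R.
  apply: final_bound => // n n0.
  have := rec n n0 n (leqnn n).
  by rewrite mulfK // gt_eqF // ltr0n.
rewrite expa in fb.
rewrite (Ffin a a0 (lexx a)) lee_fin -/(Fr a); lra.
Qed.
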